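(* Let $n\ge 7$ be an integer and define the graph $G_n$ as follows. If $n$ is odd, $G_n$ has vertices $v_1,\dots,v_n$ and edges consisting of the cycle $v_1v_2\cdots v_{n-1}v_1$ together with the edges $v_1v_{(n+1)/2}$, $v_1v_n$, $v_{(n+1)/2}v_n$, and $v_iv_{n+1-i}$ for $i=2,3,\dots,(n-1)/2$. If $n$ is even, $G_n$ has vertices $v_1,\dots,v_n$ and edges consisting of the cycle $v_1v_2\cdots v_nv_1$ together with the edges $v_2v_{n/2}$, $v_{(n+4)/2}v_n$, and $v_iv_{n+2-i}$ for $i=2,3,\dots,n/2$. Then $G_n$ is connected of order $n$ and size $\lfloor 3n/2\rfloor+1$, and every minimum vertex cut of $G_n$ induces an edge; more precisely, for $n$ odd $\{v_1,v_{(n+1)/2}\}$ is the unique minimum vertex cut, and for $n$ even the minimum vertex cuts are exactly $\{v_2,v_n\}$ and $\{v_{n/2},v_{(n+4)/2}\}$. In particular $G_n$ has no independent minimum vertex cut.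
   Context: All graphs are finite and simple. A vertex cut of a connected graph $G$ is a set $S\subset V(G)$ such that $G-S$ is disconnected. If $G$ has connectivity $k$, a vertex cut $S$ is called minimum if $|S|=k$. A vertex cut $S$ is called an independent vertex cut if $S$ is an independent set of $G$. *)

(* Defs.v *)
From mathcomp Require Import all_boot.
Set Implicit Arguments. Unset Strict Implicit. Unset Printing Implicit Defensive.

(* A simple graph is a symmetric irreflexive relation e on a finType T. *)

Definition del_rel (T : finType) (e : rel T) (S : {set T}) : rel T :=
  [rel x y | [&& e x y, x \notin S & y \notin S]].

Definition connectedg (T : finType) (e : rel T) : Prop :=
  forall x y : T, connect e x y.

Definition vertex_cut (T : finType) (e : rel T) (S : {set T}) : Prop :=
  exists x y : T, [/\ x \notin S, y \notin S & ~~ connect (del_rel e S) x y].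

Definition min_vertex_cut (T : finType) (e : rel T) (S : {set T}) : Prop :=
  vertex_cut e S /\ forall S' : {set T}, vertex_cut e S' -> #|S| <= #|S'|.

Definition independent (T : finType) (e : rel T) (S : {set T}) : Prop :=
  forall x y, x \in S -> y \in S -> ~~ e x y.

Definition edge_set (T : finType) (e : rel T) : {set {set T}} :=
  [set A : {set T} | [exists x, exists y, e x y && (A == [set x; y])]].

(* The graph G_n. Vertex v_i (1 <= i <= n) is the ordinal i-1 : 'I_n.
   gbase n i j : (1-indexed) the listed edges v_i v_j, each listed with i < j. *)
Definition gbase (n i j : nat) : bool :=
  if odd n then
    [|| (1 <= i) && (j == i.+1) && (i <= n - 2)
      , (i == 1) && (j == n - 1)
      , (i == 1) && (j == n.+1./2)
      , (i == 1) && (j == n)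
      , (i == n.+1./2) && (j == n)
      | [&& 2 <= i, i <= n.-1./2 & j == n.+1 - i] ]
  else
    [|| (1 <= i) && (j == i.+1) && (i <= n - 1)
      , (i == 1) && (j == n)
      , (i == 2) && (j == n./2)
      , (i == (n + 4)./2) && (j == n)
      | [&& 2 <= i, i <= n./2 & j == n.+2 - i] ].

Definition Gadj (n : nat) : rel 'I_n :=
  fun x y : 'I_n => gbase n (val x).+1 (val y).+1 || gbase n (val y).+1 (val x).+1.

Definition vset (n : nat) (l : seq nat) : {set 'I_n} :=
  [set x : 'I_n | (val x).+1 \in l].

Arguments Gadj n : clear implicits.
Arguments vset n l : clear implicits.

(* Main.v *)
Require Import Defs.
From mathcomp Require Import all_boot zify.
Set Implicit Arguments. Unset Strict Implicit. Unset Printing Implicit Defensive.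

Definition vv n (i : nat) : 'I_n.+1 := inord i.-1.

Lemma vvK n i : 1 <= i <= n.+1 -> (vv n i : nat) = i.-1.
Proof. move=> H; rewrite /vv inordK //; lia. Qed.

Lemma vvK' n i : 1 <= i <= n.+1 -> val (vv n i) = i.-1.
Proof. exact: vvK. Qed.

Lemma vv_val n (x : 'I_n.+1) : vv n x.+1 = x.
Proof. by rewrite /vv /= inord_val. Qed.

Lemma vv_inj n i j : 1 <= i <= n.+1 -> 1 <= j <= n.+1 -> vv n i = vv n j -> i = j.
Proof. move=> Hi Hj /(congr1 (@nat_of_ord _)); rewrite !vvK //; lia. Qed.

Lemma vv_eq n i j : 1 <= i <= n.+1 -> 1 <= j <= n.+1 -> (vv n i == vv n j) = (i == j).
Proof. move=> Hi Hj; apply/eqP/eqP => [|->//]; exact: vv_inj. Qed.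

Lemma Gadj_vv n i j : 1 <= i <= n.+1 -> 1 <= j <= n.+1 ->
  Gadj n.+1 (vv n i) (vv n j) = gbase n.+1 i j || gbase n.+1 j i.
Proof.
move=> Hi Hj; rewrite /Gadj !vvK' //.
have ->: i.-1.+1 = i by lia.
by have ->: j.-1.+1 = j by lia.
Qed.

Lemma Gadj_sym n : symmetric (Gadj n). Proof. by move=> x y; rewrite /Gadj orbC. Qed.

Lemma del_sym n S : symmetric (del_rel (Gadj n) S).
Proof. by move=> x y; rewrite /del_rel /= Gadj_sym; case: (x \in S); case: (y \in S); rewrite ?andbF. Qed.

Lemma csym n S x y : connect (del_rel (Gadj n) S) x y = connect (del_rel (Gadj n) S) y x.
Proof. exact: (sym_connect_sym (@del_sym n S)). Qed.

Lemma step n (S : {set 'I_n.+1}) i j : 1 <= i <= n.+1 -> 1 <= j <= n.+1 -> vv n i \notin S -> vv n j \notin S ->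
  gbase n.+1 i j || gbase n.+1 j i -> connect (del_rel (Gadj n.+1) S) (vv n i) (vv n j).
Proof. move=> Hi Hj Si Sj E; apply: connect1; by rewrite /del_rel /= Gadj_vv // E Si Sj. Qed.

Lemma pathc n (S : {set 'I_n.+1}) i j : 1 <= i -> i <= j -> j <= n.+1 ->
  (forall k, i <= k <= j -> vv n k \notin S) ->
  (forall k, i <= k < j -> gbase n.+1 k k.+1) ->
  connect (del_rel (Gadj n.+1) S) (vv n i) (vv n j).
Proof.
move=> H1; elim: j => [|j IH] Hij Hj HS HE; first lia.
case: (ltngtP i j.+1) => Hc; [|lia| by rewrite Hc].
apply: connect_trans (IH _ _ _ _) _.
- lia.
- lia.
- move=> k Hk; apply: HS; lia.
- move=> k Hk; apply: HE; lia.
apply: step.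
- lia.
- lia.
- apply: HS; lia.
- apply: HS; lia.
by rewrite HE //; lia.
Qed.

Lemma three n (S : {set 'I_n.+1}) i j k : #|S| <= 2 -> 1 <= i <= n.+1 -> 1 <= j <= n.+1 ->
  1 <= k <= n.+1 -> i != j -> i != k -> j != k ->
  vv n i \in S -> vv n j \in S -> vv n k \in S -> False.
Proof.
move=> HS Hi Hj Hk ij ik jk si sj sk.
have: #|[set vv n i; vv n j; vv n k]| <= #|S|.
  by apply: subset_leq_card; apply/subsetP => x; rewrite !inE; case/orP => [/orP[]|] /eqP -> .
rewrite setUC cardsU1 cards2 !inE !vv_eq //; move: ij ik jk HS.
lia.
Qed.

Lemma noex n (S : {set 'I_n.+1}) (P : nat -> bool) :
  ~~ [exists k : 'I_n.+1, P k.+1 && (vv n k.+1 \in S)] ->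
  forall i, 1 <= i <= n.+1 -> P i -> vv n i \notin S.
Proof.
move=> /existsPn H i Hi Pi; apply/negP => si; move: (H (vv n i)).
rewrite vv_val si vvK //; have ->: i.-1.+1 = i by lia.
by rewrite Pi.
Qed.

Lemma exP n (S : {set 'I_n.+1}) (P : nat -> bool) :
  [exists k : 'I_n.+1, P k.+1 && (vv n k.+1 \in S)] ->
  exists a, [/\ 1 <= a <= n.+1, P a & vv n a \in S].
Proof. case/existsP => k /andP [Pk Sk]; exists k.+1; split => //; have := ltn_ord k; lia. Qed.

Lemma stepT n (S : {set 'I_n.+1}) i k r : 1 <= i <= n.+1 -> 1 <= k <= n.+1 ->
  vv n i \notin S -> vv n k \notin S -> gbase n.+1 i k || gbase n.+1 k i ->
  connect (del_rel (Gadj n.+1) S) (vv n k) r -> connect (del_rel (Gadj n.+1) S) (vv n i) r.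
Proof. move=> Hi Hk Si Sk E; apply: connect_trans; exact: step. Qed.

Lemma gbO m i j : gbase (m.*2.+1) i j =
    [|| (1 <= i) && (j == i.+1) && (i.+1 <= m.*2)
      , (i == 1) && (j == m.*2)
      , (i == 1) && (j == m.+1)
      , (i == 1) && (j == m.*2.+1)
      , (i == m.+1) && (j == m.*2.+1)
      | [&& 2 <= i, i <= m & j + i == m.*2.+2] ].
Proof.
rewrite /gbase /= odd_double /=.
rewrite doubleK !subSS subn0.
have -> : (0 < i) && (j == i.+1) && (i <= m.*2 - 1) = (0 < i) && (j == i.+1) && (i.+1 <= m.*2) by lia.
by have -> : [&& 1 < i, i <= m & j == m.*2.+2 - i] = [&& 1 < i, i <= m & j + i == m.*2.+2] by lia.
Qed.
Lemma gbE m i j : gbase (m.*2) i j =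
    [|| (1 <= i) && (j == i.+1) && (i.+1 <= m.*2)
      , (i == 1) && (j == m.*2)
      , (i == 2) && (j == m)
      , (i == m.+2) && (j == m.*2)
      | [&& 2 <= i, i <= m & j + i == m.*2.+2] ].
Proof.
rewrite /gbase odd_double /=.
have e4 : m.*2 + 4 = (m.+2).*2 by rewrite doubleS; lia.
rewrite e4 !doubleK.
have -> : (0 < i) && (j == i.+1) && (i <= m.*2 - 1) = (0 < i) && (j == i.+1) && (i.+1 <= m.*2) by lia.
by have -> : [&& 1 < i, i <= m & j == m.*2.+2 - i] = [&& 1 < i, i <= m & j + i == m.*2.+2] by lia.
Qed.

Ltac clr := repeat match goal with
  | H : is_true (_ \in _) |- _ => clear H
  | H : is_true (~~ (_ \in _)) |- _ => clear H
  | H : is_true (~~ ((_ \in _) && (_ \in _))) |- _ => clear H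
  | H : forall _, _ |- _ => clear H
  end.
Ltac li := clr; lia.
Ltac disj := match goal with |- is_true (_ || _) => apply/orP; first [left; disj | right; disj] | _ => lia end.
Ltac gbo := match goal with H : _ = _.*2 |- _ => rewrite H !gbO; clr; disj end.
Ltac gbe := match goal with H : _ = _.*2 |- _ => rewrite H !gbE; clr; disj end.

Lemma hub_odd n (S : {set 'I_n.+1}) : 7 <= n.+1 -> odd n.+1 -> #|S| <= 2 ->
  ~~ ((vv n 1 \in S) && (vv n n./2.+1 \in S)) ->
  exists r, 1 <= r <= n.+1 /\ forall i, 1 <= i <= n.+1 -> vv n i \notin S ->
     connect (del_rel (Gadj n.+1) S) (vv n i) (vv n r).
Proof.
move=> H7 Ho HS Hc.
have [m Em] : exists m, n = m.*2 by exists n./2; move: Ho; rewrite /=; li.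
have Hm : n./2 = m by rewrite Em doubleK.
rewrite Hm in Hc *; clear Ho.
case: (boolP [exists k : 'I_n.+1, (k.+1 <= m.+1) && (vv n k.+1 \in S)]) =>
  [/(exP (P := fun i => i <= m.+1)) [a [Ha aR1 Sa]] | /(noex (P := fun i => i <= m.+1)) nR1]; last first.
  exists 1; split; first li.
  have C1 : forall i, 1 <= i <= m.+1 -> connect (del_rel (Gadj n.+1) S) (vv n i) (vv n 1).
    move=> i Hi; rewrite csym; apply: pathc; [li|li|li|move=> k Hk; apply: nR1; li|move=> k Hk; gbo].
  move=> i Hi Si.
  case: (leqP i m.+1) => Hi1; first by apply: C1 => //; li.
  case: (leqP i n) => Hi2.
  + apply: (stepT (k := n.+2 - i)); [li|li|done|apply: nR1; li|gbo|apply: C1; li].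
  + apply: (stepT (k := 1)); [li|li|done|apply: nR1; li|gbo|apply: C1; li].
case: (boolP [exists k : 'I_n.+1, (m.+2 <= k.+1 <= n) && (vv n k.+1 \in S)]) =>
  [/(exP (P := fun i => m.+2 <= i <= n)) [b [Hb bR2 Sb]] | /(noex (P := fun i => m.+2 <= i <= n)) nR2]; last first.
  exists m.+2; split; first li.
  have C2 : forall i, m.+2 <= i <= n -> connect (del_rel (Gadj n.+1) S) (vv n i) (vv n m.+2).
    move=> i Hi; rewrite csym; apply: pathc; [li|li|li|move=> k Hk; apply: nR2; li| move=> k Hk; gbo].
  have C1 : forall i, 1 <= i <= m.+1 -> vv n i \notin S -> connect (del_rel (Gadj n.+1) S) (vv n i) (vv n m.+2).
    move=> i Hi Si.
    case: (eqVneq i 1) => [i1|i1].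
      by apply: (stepT (k := n)); [li|li|done|apply: nR2; li|gbo|apply: C2; li].
    case: (eqVneq i m.+1) => [im|im].
      by apply: (stepT (k := m.+2)); [li|li|done|apply: nR2; li|gbo|apply: C2; li].
    by apply: (stepT (k := n.+2 - i)); [li|li|done|apply: nR2; li|gbo|apply: C2; li].
  move=> i Hi Si.
  case: (leqP i m.+1) => Hi1; first by apply: C1 => //; li.
  case: (leqP i n) => Hi2; first by apply: C2; li.
  case: (boolP (vv n 1 \in S)) => S1.
  - have S2 : vv n m.+1 \notin S by move: Hc; rewrite S1.
    by apply: (stepT (k := m.+1)); [li|li|done|done|gbo|apply: C1 => //; li].
  - by apply: (stepT (k := 1)); [li|li|done|done|gbo|apply: C1 => //; li].
have nS : forall k, 1 <= k <= n.+1 -> k != a -> k != b -> vv n k \notin S.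
  move=> k Hk ka kb; apply/negP => Sk; apply: (three (i:=a) (j:=b) (k:=k) HS) => //; li.
have [r [Hr Sr C1]] : exists r, [/\ 1 <= r <= m.+1, vv n r \notin S &
    forall i, 1 <= i <= m.+1 -> vv n i \notin S -> connect (del_rel (Gadj n.+1) S) (vv n i) (vv n r)].
  case: (eqVneq a 1) => [a1|a1].
  - exists m.+1; split; [li| apply: nS; li|].
    move=> i Hi Si; have ia : i != a by apply: contraNneq Si => ->.
    apply: pathc; [li|li|li|move=> k Hk; apply: nS; li| move=> k Hk; gbo].
  - exists 1; split; [li|apply: nS; li|].
    move=> i Hi Si; have ia : i != a by apply: contraNneq Si => ->.
    case: (ltnP i a) => Hia.
    + rewrite csym; apply: pathc; [li|li|li|move=> k Hk; apply: nS; li| move=> k Hk; gbo].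
    + apply: (connect_trans (y := vv n m.+1)).
      * apply: pathc; [li|li|li|move=> k Hk; apply: nS; li| move=> k Hk; gbo].
      * apply: step; [li|li|apply: nS; li|apply: nS; li|gbo].
exists r; split; first li.
move=> i Hi Si.
case: (leqP i m.+1) => Hi1; first by apply: C1 => //; li.
case: (leqP i n) => Hi2; last first.
  case: (boolP (vv n 1 \in S)) => S1.
  - have S2 : vv n m.+1 \notin S by move: Hc; rewrite S1.
    by apply: (stepT (k := m.+1)); [li|li|done|done|gbo|apply: C1 => //; li].
  - by apply: (stepT (k := 1)); [li|li|done|done|gbo|apply: C1 => //; li].
have ib : i != b by apply: contraNneq Si => ->.
case: (ltnP i b) => Hib.
- apply: (connect_trans (y := vv n m.+2)).
  + rewrite csym; apply: pathc; [li|li|li|move=> k Hk; apply: nS; li| move=> k Hk; gbo].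
  + case: (eqVneq a m.+1) => am.
    * apply: (stepT (k := m)); [li|li|apply: nS; li|apply: nS; li|gbo|apply: C1; [li|apply: nS; li]].
    * apply: (stepT (k := m.+1)); [li|li|apply: nS; li|apply: nS; li|gbo|apply: C1; [li|apply: nS; li]].
- apply: (connect_trans (y := vv n n)).
  + apply: pathc; [li|li|li|move=> k Hk; apply: nS; li| move=> k Hk; gbo].
  + case: (eqVneq a 1) => a1.
    * apply: (stepT (k := 2)); [li|li|apply: nS; li|apply: nS; li|gbo|apply: C1; [li|apply: nS; li]].
    * apply: (stepT (k := 1)); [li|li|apply: nS; li|apply: nS; li|gbo|apply: C1; [li|apply: nS; li]].
Qed.

Lemma hub_even n (S : {set 'I_n.+1}) : 7 <= n.+1 -> ~~ odd n.+1 -> #|S| <= 2 ->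
  ~~ ((vv n 2 \in S) && (vv n n.+1 \in S)) ->
  ~~ ((vv n n.+1./2 \in S) && (vv n (n.+1 + 4)./2 \in S)) ->
  exists r, 1 <= r <= n.+1 /\ forall i, 1 <= i <= n.+1 -> vv n i \notin S ->
     connect (del_rel (Gadj n.+1) S) (vv n i) (vv n r).
Proof.
move=> H7 Ho HS Hc1 Hc2.
have [m Em] : exists m, n.+1 = m.*2 by exists n.+1./2; move: Ho; lia.
have Hm : n.+1./2 = m by rewrite Em doubleK.
have e4 : m.*2 + 4 = (m.+2).*2 by lia.
have Hm2 : (n.+1 + 4)./2 = m.+2 by rewrite Em e4 doubleK.
rewrite Hm Hm2 in Hc2 *; clear Ho Hm Hm2.
case: (boolP [exists k : 'I_n.+1, (2 <= k.+1 <= m) && (vv n k.+1 \in S)]) =>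
  [/(exP (P := fun i => 2 <= i <= m)) [a [Ha aR1 Sa]] | /(noex (P := fun i => 2 <= i <= m)) nR1]; last first.
  exists 2; split; first li.
  have C1 : forall i, 2 <= i <= m -> connect (del_rel (Gadj n.+1) S) (vv n i) (vv n 2).
    move=> i Hi; rewrite csym; apply: pathc; [li|li|li|move=> k Hk; apply: nR1; li|move=> k Hk; gbe].
  move=> i Hi Si.
  case: (eqVneq i 1) => [i1|i1].
    by apply: (stepT (k := 2)); [li|li|done|apply: nR1; li|gbe|apply: C1; li].
  case: (leqP i m) => Hi1; first by apply: C1; li.
  case: (eqVneq i m.+1) => [im|im].
    by apply: (stepT (k := m)); [li|li|done|apply: nR1; li|gbe|apply: C1; li].
  by apply: (stepT (k := n.+3 - i)); [li|li|done|apply: nR1; li|gbe|apply: C1; li].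
case: (boolP [exists k : 'I_n.+1, (m.+2 <= k.+1 <= n.+1) && (vv n k.+1 \in S)]) =>
  [/(exP (P := fun i => m.+2 <= i <= n.+1)) [b [Hb bR2 Sb]] | /(noex (P := fun i => m.+2 <= i <= n.+1)) nR2]; last first.
  exists m.+2; split; first li.
  have C2 : forall i, m.+2 <= i <= n.+1 -> connect (del_rel (Gadj n.+1) S) (vv n i) (vv n m.+2).
    move=> i Hi; rewrite csym; apply: pathc; [li|li|li|move=> k Hk; apply: nR2; li|move=> k Hk; gbe].
  move=> i Hi Si.
  case: (eqVneq i 1) => [i1|i1].
    by apply: (stepT (k := n.+1)); [li|li|done|apply: nR2; li|gbe|apply: C2; li].
  case: (leqP i m) => Hi1.
    by apply: (stepT (k := n.+3 - i)); [li|li|done|apply: nR2; li|gbe|apply: C2; li].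
  case: (eqVneq i m.+1) => [im|im].
    by apply: (stepT (k := m.+2)); [li|li|done|apply: nR2; li|gbe|apply: C2; li].
  by apply: C2; li.
have nS : forall k, 1 <= k <= n.+1 -> k != a -> k != b -> vv n k \notin S.
  move=> k Hk ka kb; apply/negP => Sk; apply: (three (i:=a) (j:=b) (k:=k) HS) => //; li.
have [r1 [Hr1 Sr1 C1]] : exists r, [/\ 2 <= r <= m, vv n r \notin S &
    forall i, 2 <= i <= m -> vv n i \notin S -> connect (del_rel (Gadj n.+1) S) (vv n i) (vv n r)].
  case: (eqVneq a 2) => [a1|a1].
  - exists 3; split; [li| apply: nS; li|].
    move=> i Hi Si; have ia : i != a by apply: contraNneq Si => ->.
    rewrite csym; apply: pathc; [li|li|li|move=> k Hk; apply: nS; li| move=> k Hk; gbe].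
  - exists 2; split; [li|apply: nS; li|].
    move=> i Hi Si; have ia : i != a by apply: contraNneq Si => ->.
    case: (ltnP i a) => Hia.
    + rewrite csym; apply: pathc; [li|li|li|move=> k Hk; apply: nS; li| move=> k Hk; gbe].
    + apply: (connect_trans (y := vv n m)).
      * apply: pathc; [li|li|li|move=> k Hk; apply: nS; li| move=> k Hk; gbe].
      * apply: step; [li|li|apply: nS; li|apply: nS; li|gbe].
have [r2 [Hr2 Sr2 C2]] : exists r, [/\ m.+2 <= r <= n.+1, vv n r \notin S &
    forall i, m.+2 <= i <= n.+1 -> vv n i \notin S -> connect (del_rel (Gadj n.+1) S) (vv n i) (vv n r)].
  case: (eqVneq b m.+2) => [b1|b1].
  - exists m.+3; split; [li| apply: nS; li|].
    move=> i Hi Si; have ib : i != b by apply: contraNneq Si => ->.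
    rewrite csym; apply: pathc; [li|li|li|move=> k Hk; apply: nS; li| move=> k Hk; gbe].
  - exists m.+2; split; [li|apply: nS; li|].
    move=> i Hi Si; have ib : i != b by apply: contraNneq Si => ->.
    case: (ltnP i b) => Hib.
    + rewrite csym; apply: pathc; [li|li|li|move=> k Hk; apply: nS; li| move=> k Hk; gbe].
    + apply: (connect_trans (y := vv n n.+1)).
      * apply: pathc; [li|li|li|move=> k Hk; apply: nS; li| move=> k Hk; gbe].
      * apply: step; [li|li|apply: nS; li|apply: nS; li|gbe].
have [c [Hc Hca Hcb]] : exists c, [/\ 2 <= c <= 4, c != a & n.+3 - c != b].
  case: (boolP ((a != 2) && (b != n.+1))) => h1; first by exists 2; split; li.
  case: (boolP ((a != 3) && (b != n))) => h2; first by exists 3; split; li.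
  by exists 4; split; li.
have Br : connect (del_rel (Gadj n.+1) S) (vv n r2) (vv n r1).
  rewrite csym; apply: (connect_trans (y := vv n c)).
    by rewrite csym; apply: C1; [li|apply: nS; li].
  apply: (stepT (k := n.+3 - c)); [li|li|apply: nS; li|apply: nS; li|gbe|].
  by apply: C2; [li|apply: nS; li].
exists r1; split; first li.
move=> i Hi Si.
case: (eqVneq i 1) => [i1|i1].
  case: (boolP (vv n 2 \in S)) => S1.
  - have S2 : vv n n.+1 \notin S by move: Hc1; rewrite S1.
    apply: (stepT (k := n.+1)); [li|li|done|done|gbe|].
    by apply: connect_trans Br; apply: C2 => //; li.
  - by apply: (stepT (k := 2)); [li|li|done|done|gbe|apply: C1 => //; li].
case: (leqP i m) => Hi1; first by apply: C1 => //; li.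
case: (eqVneq i m.+1) => [im|im].
  case: (boolP (vv n m \in S)) => S1.
  - have S2 : vv n m.+2 \notin S by move: Hc2; rewrite S1.
    apply: (stepT (k := m.+2)); [li|li|done|done|gbe|].
    by apply: connect_trans Br; apply: C2 => //; li.
  - by apply: (stepT (k := m)); [li|li|done|done|gbe|apply: C1 => //; li].
by apply: connect_trans Br; apply: C2 => //; li.
Qed.

Lemma eq_vv n (x : 'I_n.+1) i : 1 <= i <= n.+1 -> (x == vv n i) = (x.+1 == i).
Proof. move=> Hi; rewrite -{1}(vv_val x) vv_eq //; have := ltn_ord x; lia. Qed.

Lemma vset2 n i j : 1 <= i <= n.+1 -> 1 <= j <= n.+1 ->
  vset n.+1 [:: i; j] = [set vv n i; vv n j].
Proof. by move=> Hi Hj; apply/setP => x; rewrite !inE !eq_vv. Qed.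

Lemma vset_vv n l k : 1 <= k <= n.+1 -> (vv n k \in vset n.+1 l) = (k \in l).
Proof. move=> Hk; rewrite inE vvK'; [by have ->: k.-1.+1 = k by lia | done]. Qed.

Lemma conn_of n (S : {set 'I_n.+1}) :
  (exists r, 1 <= r <= n.+1 /\ forall i, 1 <= i <= n.+1 -> vv n i \notin S ->
     connect (del_rel (Gadj n.+1) S) (vv n i) (vv n r)) ->
  forall x y, x \notin S -> y \notin S -> connect (del_rel (Gadj n.+1) S) x y.
Proof.
move=> [r [Hr H]] x y Sx Sy.
have hx := H x.+1; have hy := H y.+1; rewrite vv_val in hx; rewrite vv_val in hy.
apply: connect_trans (hx _ Sx) _; first by have := ltn_ord x; lia.
by rewrite csym; apply: hy => //; have := ltn_ord y; lia.
Qed.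

Lemma conn_odd n (S : {set 'I_n.+1}) : 7 <= n.+1 -> odd n.+1 -> #|S| <= 2 ->
  ~~ (vset n.+1 [:: 1; n.+2./2] \subset S) ->
  forall x y, x \notin S -> y \notin S -> connect (del_rel (Gadj n.+1) S) x y.
Proof.
move=> H7 Ho HS Hsub; apply: conn_of; apply: hub_odd => //.
apply: contra Hsub => /andP [s1 s2]; rewrite vset2; [|lia|lia].
by apply/subsetP => z; rewrite !inE => /orP [] /eqP ->.
Qed.

Lemma conn_even n (S : {set 'I_n.+1}) : 7 <= n.+1 -> ~~ odd n.+1 -> #|S| <= 2 ->
  ~~ (vset n.+1 [:: 2; n.+1] \subset S) ->
  ~~ (vset n.+1 [:: n.+1./2; (n.+1 + 4)./2] \subset S) ->
  forall x y, x \notin S -> y \notin S -> connect (del_rel (Gadj n.+1) S) x y.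
Proof.
move=> H7 Ho HS Hsub1 Hsub2; apply: conn_of; apply: hub_even => //.
- apply: contra Hsub1 => /andP [s1 s2]; rewrite vset2; [|lia|lia].
  by apply/subsetP => z; rewrite !inE => /orP [] /eqP ->.
- apply: contra Hsub2 => /andP [s1 s2]; rewrite vset2; [|lia|lia].
  by apply/subsetP => z; rewrite !inE => /orP [] /eqP ->.
Qed.

Lemma iso_cut n (S : {set 'I_n.+1}) i j : 1 <= i <= n.+1 -> 1 <= j <= n.+1 -> i != j ->
  (forall k, 1 <= k <= n.+1 -> gbase n.+1 i k || gbase n.+1 k i -> vv n k \in S) ->
  vv n i \notin S -> vv n j \notin S -> vertex_cut (Gadj n.+1) S.
Proof.
move=> Hi Hj ij Hn Si Sj; exists (vv n i), (vv n j); split => //.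
apply/negP => /connectP [[|z p]] /=.
  by move=> _ /(vv_inj Hj Hi) E; move: ij; rewrite E eqxx.
case/andP => /and3P [Hz _ Sz] _ _.
move: Hz Sz; rewrite -(vv_val z) Gadj_vv //; last by have := ltn_ord z; lia.
move=> E; rewrite Hn //; have := ltn_ord z; lia.
Qed.

Lemma charac (T : finType) (e : rel T) (sp : pred {set T}) :
  (forall S : {set T}, #|S| <= 2 -> (forall A, sp A -> ~~ (A \subset S)) -> ~ vertex_cut e S) ->
  (forall A, sp A -> #|A| = 2 /\ vertex_cut e A) ->
  (exists A, sp A) ->
  forall S : {set T}, min_vertex_cut e S <-> sp S.
Proof.
move=> Conn Sp [A0 sA0] S; split.
- move=> [cS minS].
  have le2 : #|S| <= 2 by have [<- c] := Sp _ sA0; exact: minS.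
  case: (boolP [exists A, sp A && (A \subset S)]) => [/existsP [A /andP [sA AS]]|].
    have [cA _] := Sp _ sA.
    have /eqP <- // : A == S by rewrite eqEcard AS cA.
  move/existsPn => H; exfalso; apply: (Conn S le2) => // A sA.
  by move: (H A); rewrite sA.
- move=> sS; have [cS vS] := Sp _ sS; split => // S' cS'; rewrite cS.
  case: (leqP 2 #|S'|) => // lt2; exfalso; apply: (Conn S') => //; first by lia.
  move=> A sA; apply/negP => AS; have [cA _] := Sp _ sA.
  by have := subset_leq_card AS; rewrite cA; lia.
Qed.

Definition hpair n (p : nat * nat) : {set 'I_n.+1} := [set vv n p.1; vv n p.2].

Lemma card_edges n (L : seq (nat * nat)) :
  uniq L ->
  (forall i j, gbase n.+1 i j = ((i, j) \in L)) ->
  (forall i j, gbase n.+1 i j -> 1 <= i < j /\ j <= n.+1) ->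
  #|edge_set (Gadj n.+1)| = size L.
Proof.
move=> UL HL Hr.
have Hm : forall p, p \in L -> 1 <= p.1 < p.2 /\ p.2 <= n.+1.
  by case=> i j; rewrite -HL; apply: Hr.
set h := hpair n.
have E : edge_set (Gadj n.+1) =i map h L.
  move=> A; rewrite inE; apply/existsP/mapP.
  - case=> x /existsP [y /andP [Exy /eqP ->]].
    have Hx := ltn_ord x; have Hy := ltn_ord y.
    have : gbase n.+1 x.+1 y.+1 || gbase n.+1 y.+1 x.+1.
      by rewrite -Gadj_vv ?vv_val //; lia.
    case/orP => G.
    + by exists (x.+1, y.+1); [rewrite -HL | rewrite /h /hpair /= !vv_val].
    + by exists (y.+1, x.+1); [rewrite -HL | rewrite /h /hpair /= !vv_val setUC].
  - case=> p pL ->; have [h1 h2] := Hm p pL.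
    exists (vv n p.1); apply/existsP; exists (vv n p.2).
    rewrite Gadj_vv; [|lia|lia].
    by rewrite HL; move: pL; case: p {h1 h2} => a b /= ->; rewrite eqxx.
have U : uniq (map h L).
  rewrite map_inj_in_uniq // => [[a b] [c d]] pL qL /setP Heq.
  have [/= p1 p2] := Hm _ pL; have [/= q1 q2] := Hm _ qL.
  move: (Heq (vv n a)) (Heq (vv n b)); rewrite /h /hpair /= !inE !vv_eq ?eqxx ?orbT; [|lia..].
  move=> /esym/orP [/eqP ac|/eqP ad] /esym/orP [/eqP bc|/eqP bd]; subst;
    first [by [] | exfalso; lia].
rewrite -(size_map h L); move/card_uniqP: U => <-; exact: eq_card.
Qed.

Lemma memP (s : seq nat) (f : nat -> nat) i j :
  ((i, j) \in [seq (k, f k) | k <- s]) = (i \in s) && (j == f i).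
Proof.
apply/mapP/andP => [[k ks [-> ->]] | [iS /eqP ->]]; first by [].
by exists i.
Qed.

Definition Lodd m : seq (nat * nat) :=
  [seq (k, k.+1) | k <- iota 1 (m.*2 - 1)] ++
  [:: (1, m.*2); (1, m.+1); (1, m.*2.+1); (m.+1, m.*2.+1)] ++
  [seq (k, m.*2.+2 - k) | k <- iota 2 (m - 1)].

Lemma Lodd_uniq m : 3 <= m -> uniq (Lodd m).
Proof.
move=> H3.
rewrite /Lodd cat_uniq; apply/and3P; split.
+ by rewrite map_inj_uniq ?iota_uniq // => a b [].
+ apply/hasPn => -[x y]; rewrite mem_cat !inE !xpair_eqE !memP !mem_iota; lia.
+ rewrite cat_uniq; apply/and3P; split.
  * rewrite /= !inE !xpair_eqE; lia.
  * apply/hasPn => -[x y]; rewrite !memP !mem_iota !inE !xpair_eqE; lia.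
  * by rewrite map_inj_uniq ?iota_uniq // => a b [].
Qed.

Lemma Lodd_mem m i j : gbase m.*2.+1 i j = ((i, j) \in Lodd m).
Proof.
rewrite gbO /Lodd !mem_cat !memP !mem_iota !inE !xpair_eqE.
apply/idP/idP.
- by repeat case/orP; move=> H; clr; disj.
- by repeat case/orP; move=> H; clr; disj.
Qed.

Lemma edges_odd n m : n = m.*2 -> 3 <= m -> #|edge_set (Gadj n.+1)| = (3 * n.+1)./2 + 1.
Proof.
move=> Em H3.
rewrite (@card_edges n (Lodd m)).
- by rewrite /Lodd !size_cat !size_map !size_iota /=; lia.
- exact: Lodd_uniq.
- by move=> i j; rewrite Em Lodd_mem.
- move=> i j; rewrite Em gbO; lia.
Qed.

Definition Leven m : seq (nat * nat) :=
  [seq (k, k.+1) | k <- iota 1 (m.*2 - 1)] ++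
  [:: (1, m.*2); (2, m); (m.+2, m.*2)] ++
  [seq (k, m.*2.+2 - k) | k <- iota 2 (m - 1)].

Lemma Leven_uniq m : 4 <= m -> uniq (Leven m).
Proof.
move=> H3.
rewrite /Leven cat_uniq; apply/and3P; split.
+ by rewrite map_inj_uniq ?iota_uniq // => a b [].
+ apply/hasPn => -[x y]; rewrite mem_cat !inE !xpair_eqE !memP !mem_iota; lia.
+ rewrite cat_uniq; apply/and3P; split.
  * rewrite /= !inE !xpair_eqE; lia.
  * apply/hasPn => -[x y]; rewrite !memP !mem_iota !inE !xpair_eqE; lia.
  * by rewrite map_inj_uniq ?iota_uniq // => a b [].
Qed.

Lemma Leven_mem m i j : gbase m.*2 i j = ((i, j) \in Leven m).
Proof.
rewrite gbE /Leven !mem_cat !memP !mem_iota !inE !xpair_eqE.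
apply/idP/idP.
- by repeat case/orP; move=> H; clr; disj.
- by repeat case/orP; move=> H; clr; disj.
Qed.

Lemma edges_even n m : n.+1 = m.*2 -> 4 <= m -> #|edge_set (Gadj n.+1)| = (3 * n.+1)./2 + 1.
Proof.
move=> Em H3.
rewrite (@card_edges n (Leven m)).
- by rewrite /Leven !size_cat !size_map !size_iota /=; lia.
- exact: Leven_uniq.
- by move=> i j; rewrite Em Leven_mem.
- move=> i j; rewrite Em gbE; lia.
Qed.

Lemma nsub (T : finType) (A S : {set T}) : #|S| < #|A| -> ~~ (A \subset S).
Proof. move=> H; apply/negP => /subset_leq_card; lia. Qed.

Lemma card_vset2 n i j : 1 <= i <= n.+1 -> 1 <= j <= n.+1 -> i != j -> #|vset n.+1 [:: i; j]| = 2.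
Proof. by move=> Hi Hj ij; rewrite vset2 // cards2 vv_eq // ij. Qed.

Unset Implicit Arguments.

Theorem mainTheorem7 (n : nat) (hn : 7 <= n) :
  [/\ connectedg (Gadj n),
      #|'I_n| = n &
      #|edge_set (Gadj n)| = (3 * n)./2 + 1] /\
  [/\ (forall S : {set 'I_n}, min_vertex_cut (Gadj n) S ->
         exists x y : 'I_n, [/\ x \in S, y \in S & Gadj n x y]),
      (odd n -> forall S : {set 'I_n},
         min_vertex_cut (Gadj n) S <-> S = vset n [:: 1; n.+1./2]),
      (~~ odd n -> forall S : {set 'I_n},
         min_vertex_cut (Gadj n) S <->
         (S = vset n [:: 2; n] \/ S = vset n [:: n./2; (n + 4)./2]))
    & ~ (exists S : {set 'I_n}, min_vertex_cut (Gadj n) S /\ independent (Gadj n) S)].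
Proof.
case: n hn => [//|n] hn.
have sub0 : forall x y : 'I_n.+1, connect (del_rel (Gadj n.+1) set0) x y -> connect (Gadj n.+1) x y.
  move=> x y; apply: connect_sub => u v /andP [h _]; exact: connect1.
case: (boolP (odd n.+1)) => Ho.
- have [m Em] : exists m, n = m.*2 by exists n./2; move: Ho; rewrite /=; lia.
  have H3 : 3 <= m by lia.
  have hh : n.+2./2 = m.+1 by rewrite Em; lia.
  rewrite hh.
  set A := vset n.+1 [:: 1; m.+1].
  have cA : #|A| = 2 by apply: card_vset2; lia.
  have cutA : vertex_cut (Gadj n.+1) A.
    apply: (@iso_cut n A n.+1 2); [lia|lia|lia| |rewrite /A vset_vv ?inE; lia|rewrite /A vset_vv ?inE; lia].
    move=> k Hk; rewrite /A vset_vv // !inE; move: Hk; rewrite Em !gbO; clear -H3; lia.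
  have char : forall S, min_vertex_cut (Gadj n.+1) S <-> S = A.
    move=> S; rewrite (@charac _ _ (fun B => B == A)).
    + by split => [/eqP|->]; rewrite ?eqxx.
    + move=> S' HS H [x [y [Sx Sy C]]]; move/negP: C; apply; apply: conn_odd => //.
      by rewrite hh; exact: H.
    + by move=> B /eqP ->.
    + by exists A.
  have adj : forall S, min_vertex_cut (Gadj n.+1) S -> exists x y, [/\ x \in S, y \in S & Gadj n.+1 x y].
    move=> S /char ->; exists (vv n 1), (vv n m.+1).
    rewrite /A !vset_vv ?inE ?eqxx ?orbT; try lia.
    split => //; rewrite Gadj_vv; try lia.
    rewrite Em !gbO; clear -H3; lia.
  split; split.
  + move=> x y; apply: sub0; apply: conn_odd; rewrite ?cards0 ?inE //.
    by apply: nsub; rewrite cards0 hh cA.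
  + exact: card_ord.
  + exact: (edges_odd Em).
  + exact: adj.
  + by move=> _; exact: char.
  + by [].
  + move=> [S [mc ind]]; have [x [y [xS yS a]]] := adj S mc.
    by move: (ind x y xS yS); rewrite a.
- have [m Em] : exists m, n.+1 = m.*2 by exists n.+1./2; move: Ho; lia.
  have H3 : 4 <= m by lia.
  have h1 : n.+1./2 = m by rewrite Em; lia.
  have h2 : (n.+1 + 4)./2 = m.+2 by rewrite Em; lia.
  rewrite h1 h2.
  set A1 := vset n.+1 [:: 2; n.+1].
  set A2 := vset n.+1 [:: m; m.+2].
  have cA1 : #|A1| = 2 by apply: card_vset2; lia.
  have cA2 : #|A2| = 2 by apply: card_vset2; lia.
  have cut1 : vertex_cut (Gadj n.+1) A1.
    apply: (@iso_cut n A1 1 3); [lia|lia|lia| |rewrite /A1 vset_vv ?inE; lia|rewrite /A1 vset_vv ?inE; lia].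
    move=> k Hk; rewrite /A1 vset_vv // !inE; move: Hk; rewrite Em !gbE; clear -H3; lia.
  have cut2 : vertex_cut (Gadj n.+1) A2.
    apply: (@iso_cut n A2 m.+1 1); [lia|lia|lia| |rewrite /A2 vset_vv ?inE; lia|rewrite /A2 vset_vv ?inE; lia].
    move=> k Hk; rewrite /A2 vset_vv // !inE; move: Hk; rewrite Em !gbE; clear -H3; lia.
  have char : forall S, min_vertex_cut (Gadj n.+1) S <-> (S = A1 \/ S = A2).
    move=> S; rewrite (@charac _ _ (fun B => (B == A1) || (B == A2))).
    + by split => [/orP [/eqP|/eqP]|[->|->]]; [left|right| rewrite eqxx| rewrite eqxx orbT].
    + move=> S' HS H [x [y [Sx Sy C]]]; move/negP: C; apply; apply: conn_even => //.
      * by apply: H; rewrite eqxx.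
      * by rewrite h1 h2; apply: H; rewrite eqxx orbT.
    + by move=> B /orP [/eqP ->|/eqP ->].
    + by exists A1; rewrite eqxx.
  have adj : forall S, min_vertex_cut (Gadj n.+1) S -> exists x y, [/\ x \in S, y \in S & Gadj n.+1 x y].
    move=> S /char [->|->].
    * exists (vv n 2), (vv n n.+1).
      rewrite /A1 !vset_vv ?inE ?eqxx ?orbT; try lia.
      split => //; rewrite Gadj_vv; try lia.
      rewrite Em !gbE; clear -H3; lia.
    * exists (vv n m), (vv n m.+2).
      rewrite /A2 !vset_vv ?inE ?eqxx ?orbT; try lia.
      split => //; rewrite Gadj_vv; try lia.
      rewrite Em !gbE; clear -H3; lia.
  split; split.
  + move=> x y; apply: sub0; apply: conn_even; rewrite ?cards0 ?inE //;
      by apply: nsub; rewrite cards0 ?h1 ?h2 ?cA1 ?cA2.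
  + exact: card_ord.
  + exact: (edges_even Em).
  + exact: adj.
  + by [].
  + by move=> _; exact: char.
  + move=> [S [mc ind]]; have [x [y [xS yS a]]] := adj S mc.
    by move: (ind x y xS yS); rewrite a.
Qed.
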